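(* Under the hypotheses and notation of the main entropy theorem (symmetric parameters $q_0=q_1=\sqrt{1-Q}$, $W=(I_{A_1}\otimes V)\mathbf{Rw}$ with the stated norm conditions on $\ket{e_i},\ket{f_i}$), let $\ket{\Phi^\pm}=\tfrac1{\sqrt2}(\ket{00}\pm\ket{11})$, $\tau=W\ket{\Phi^+}\bra{\Phi^+}W^*$, $\mu=W\ket{\Phi^-}\bra{\Phi^-}W^*$, and $\sigma=\tfrac12W(\ket{00}\bra{00}+\ket{11}\bra{11})W^*$. Then \[ \sigma_{A_1^ZE}=\tfrac12\tau_{A_1^ZE}+\tfrac12\mu_{A_1^ZE} \qquad\text{and}\qquad \tfrac12\big\|\tau_{A_1^ZE}-\mu_{A_1^ZE}\big\|_1\le 4Q(1-Q). \]
   Context: Setting: $\mathcal{H}_{A_1}=\mathcal{H}_{A_2}=\mathbb{C}^2$, finite-dimensional $\mathcal{H}_E$ with orthonormal $\ket0_E,\ket1_E$; $\eta\in\mathbb{C}$, $|\eta|\le1$, $\ket{e}=\eta\ket0_E+\sqrt{1-|\eta|^2}\ket1_E$, $\ket{f}=-\overline\eta\ket0_E+\sqrt{1-|\eta|^2}\ket1_E$; $\mathbf{Rw}\ket{00}=\sqrt{1-Q}\ket{000}+\sqrt{Q}\ket{1}\ket0\ket f$, $\mathbf{Rw}\ket{11}=\sqrt Q\ket0\ket1\ket e+\sqrt{1-Q}\ket{110}$ (order $A_1A_2E$); $V$ unitary on $\mathcal{H}_{A_2}\otimes\mathcal{H}_E$ with $V\ket0\ket0_E=\ket0\ket{e_0}+\ket1\ket{e_1}$,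 $V\ket1\ket0_E=\ket0\ket{e_2}+\ket1\ket{e_3}$, $V\ket0\ket f=\ket0\ket{f_0}+\ket1\ket{f_1}$, $V\ket1\ket e=\ket0\ket{f_2}+\ket1\ket{f_3}$, and assumed $\|e_0\|^2=\|e_3\|^2=\|f_0\|^2=\|f_3\|^2=1-Q$, $\|e_1\|^2=\|e_2\|^2=\|f_1\|^2=\|f_2\|^2=Q$. For a state $\rho$ on $A_1A_2E$, $\rho_{A_1^ZE}=\sum_{a}\ket a\bra a\otimes\mathrm{tr}_{A_1A_2}[(\ket a\bra a_{A_1}\otimes I)\rho]$. $\|\cdot\|_1$ is the trace norm. *)

(* Defs.v *)
From HB Require Import structures.
From mathcomp Require Import all_boot all_order all_algebra all_field.
Set Implicit Arguments. Unset Strict Implicit. Unset Printing Implicit Defensive.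
Import Order.TTheory GRing.Theory Num.Theory.
Local Open Scope ring_scope.

Definition adj (m n : nat) (A : 'M[algC]_(m, n)) : 'M[algC]_(n, m) :=
  (map_mx Num.conj A)^T.

(* Kronecker (tensor) product; the index of (i1,i2) in 'I_(m1*m2) is
   mxvec_index i1 i2 (first factor = most significant). *)
Definition kron (m1 n1 m2 n2 : nat) (A : 'M[algC]_(m1, n1)) (B : 'M[algC]_(m2, n2))
  : 'M[algC]_(m1 * m2, n1 * n2) :=
  \matrix_(k, l)
    match mxvec_indexP k, mxvec_indexP l with
    | isMxvecIndex i1 i2, isMxvecIndex j1 j2 => A i1 j1 * B i2 j2
    end.

Definition ket0 : 'cV[algC]_2 := delta_mx ord0 0.
Definition ket1 : 'cV[algC]_2 := delta_mx ord_max 0.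
Definition ket (a : 'I_2) : 'cV[algC]_2 := delta_mx a 0.

Definition inner (n : nat) (u v : 'cV[algC]_n) : algC := (adj u *m v) 0 0.
Definition sqnorm (n : nat) (v : 'cV[algC]_n) : algC := inner v v.

(* partial trace over A1 A2 of an operator on A1 (x) (A2 (x) E), dim E = d *)
Definition ptrA1A2 (d : nat) (M : 'M[algC]_(2 * (2 * d))) : 'M[algC]_d :=
  \matrix_(i, j) \sum_(a < 2) \sum_(b < 2)
      M (mxvec_index a (mxvec_index b i)) (mxvec_index a (mxvec_index b j)).

(* rho_{A1^Z E} = sum_a |a><a| (x) tr_{A1A2}[(|a><a|_{A1} (x) I) rho] *)
Definition rhoZE (d : nat) (rho : 'M[algC]_(2 * (2 * d))) : 'M[algC]_(2 * d) :=
  \sum_(a < 2) kron (ket a *m adj (ket a))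
                    (ptrA1A2 (kron (ket a *m adj (ket a)) (1%:M : 'M[algC]_(2 * d)) *m rho)).

(* trace norm: sum of the singular values, i.e. of the square roots of the
   eigenvalues (with multiplicity) of X^* X *)
Definition tnorm (n : nat) (X : 'M[algC]_n) : algC :=
  \sum_(z <- sval (closed_field_poly_normal (char_poly (adj X *m X)))) sqrtC z.

(* Main.v *)
Require Import Defs.
From HB Require Import structures.
From mathcomp Require Import all_boot all_order all_algebra all_field.
From mathcomp Require Import ring.
Import Order.TTheory GRing.Theory Num.Theory.
Local Open Scope ring_scope.

Lemma adjM m n p (A : 'M[algC]_(m, n)) (B : 'M[algC]_(n, p)) :
  adj (A *m B) = adj B *m adj A.
Proof. by rewrite /adj map_mxM trmx_mul. Qed.

Lemma adjK m n (A : 'M[algC]_(m, n)) : adj (adj A) = A.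
Proof. by apply/matrixP => i j; rewrite !mxE conjCK. Qed.

Lemma adjD m n (A B : 'M[algC]_(m, n)) : adj (A + B) = adj A + adj B.
Proof. by apply/matrixP => i j; rewrite !mxE rmorphD. Qed.

Lemma adjZ m n (a : algC) (A : 'M[algC]_(m, n)) : adj (a *: A) = a^* *: adj A.
Proof. by apply/matrixP => i j; rewrite !mxE rmorphM. Qed.

Lemma adjN m n (A : 'M[algC]_(m, n)) : adj (- A) = - adj A.
Proof. by apply/matrixP => i j; rewrite !mxE rmorphN. Qed.

Lemma adjB m n (A B : 'M[algC]_(m, n)) : adj (A - B) = adj A - adj B.
Proof. by rewrite adjD adjN. Qed.

Lemma adj_diag n (e : 'rV[algC]_n) : adj (diag_mx e) = diag_mx (map_mx Num.conj e).
Proof. by rewrite /adj map_diag_mx tr_diag_mx. Qed.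

Lemma adj1 n : adj (1%:M : 'M[algC]_n) = 1%:M.
Proof. by apply/matrixP => i j; rewrite !mxE rmorph_nat eq_sym. Qed.

Lemma charpoly_conj n (P M : 'M[algC]_n) : P \in unitmx ->
  char_poly (invmx P *m M *m P) = char_poly M.
Proof.
move=> Pu; rewrite /char_poly /char_poly_mx.
set P' := map_mx polyC P.
have P'u : P' \in unitmx by rewrite map_unitmx.
have e1 : map_mx polyC (invmx P) = invmx P' by rewrite map_invmx.
rewrite !map_mxM e1.
set M' := map_mx polyC M.
have eX : (scalar_mx 'X : 'M_n) = invmx P' *m 'X%:M *m P'.
  by rewrite -mulmxA -scalar_mxC mulmxA mulVmx // mul1mx.
rewrite [X in \det (X - _)]eX -mulmxBl -mulmxBr !det_mulmx mulrC mulrA -det_mulmx.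
by rewrite mulmxV // det1 mul1r.
Qed.

Lemma charpoly_diag n (e : 'rV[algC]_n) :
  char_poly (diag_mx e) = \prod_(i < n) ('X - (e 0 i)%:P).
Proof.
rewrite char_poly_trig ?diag_mx_is_trig //.
by apply: eq_bigr => i _; rewrite mxE eqxx mulr1n.
Qed.
Lemma tnorm_herm n (X : 'M[algC]_n) : adj X = X ->
  exists Z : 'M[algC]_n, adj Z *m Z = 1%:M /\ tnorm X = \tr (Z *m X) /\ 0 <= tnorm X.
Proof.
move=> hX.
have nX : X \is normalmx.
  by apply/normalmxP; rewrite -map_trmx -/(adj X) hX.
set P := spectralmx X; set e := spectral_diag X.
have HX : X = invmx P *m diag_mx e *m P := elimT (@orthomx_spectralP _ n X) nX.
have Pun : P \is unitarymx := spectral_unitarymx X.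
clearbody P e.
have Pu : P \in unitmx := unitarymx_unit Pun.
have iPE : invmx P = adj P by rewrite invmx_unitary // /adj map_trmx.
have ereal : forall i, e 0 i \is Num.real.
  have hD : diag_mx (map_mx Num.conj e) = diag_mx e.
    have := hX; rewrite {1 2}HX !adjM adj_diag iPE adjK -iPE.
    move=> /(congr1 (fun Y => P *m Y *m invmx P)) /=.
    by rewrite !mulmxA mulmxK // mulmxV // !mul1mx mulmxK.
  move=> i; move/matrixP: hD => /(_ i i); rewrite !mxE eqxx !mulr1n.
  by move/CrealP.
pose s i := if 0 <= e 0 i then 1 else -1 : algC.
have sab : forall i, s i * e 0 i = `|e 0 i|.
  move=> i; rewrite /s; case: ifP => h; first by rewrite mul1r ger0_norm.
  rewrite mulN1r ler0_norm //; apply: ltW.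
  by rewrite (real_ltNge (ereal i) (rpred0 _)) h.
have ss : forall i, s i * s i = 1.
  by move=> i; rewrite /s; case: ifP; rewrite ?mulr1 ?mulrNN ?mulr1.
have sr : forall i, (s i)^* = s i.
  by move=> i; rewrite /s; case: ifP; rewrite ?rmorphN rmorph1.
pose S := diag_mx (\row_i s i).
have adjS : adj S = S.
  by rewrite adj_diag; congr diag_mx; apply/rowP => i; rewrite !mxE sr.
have SS : S *m S = 1%:M.
  by apply/matrixP => i j; rewrite mulmx_diag !mxE ss.
exists (invmx P *m S *m P); split.
  rewrite !adjM adjS iPE adjK -iPE.
  by rewrite !mulmxA mulmxK // -(mulmxA _ S S) SS mulmx1 mulVmx.
have trE : \tr (invmx P *m S *m P *m X) = \sum_i `|e 0 i|.
  rewrite HX !mulmxA mulmxK // mxtrace_mulC !mulmxA mulmxV // mul1mx.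
  by rewrite mulmx_diag mxtrace_diag; apply: eq_bigr => i _; rewrite !mxE sab.
have cpE : char_poly (adj X *m X) = \prod_(i < n) ('X - (e 0 i ^+ 2)%:P).
  rewrite hX HX !mulmxA mulmxK // -(mulmxA _ (diag_mx e) (diag_mx e)).
  rewrite mulmx_diag charpoly_conj // charpoly_diag.
  by apply: eq_bigr => i _; rewrite !mxE expr2.
have tnE : tnorm X = \sum_i `|e 0 i|.
  rewrite /tnorm; case: closed_field_poly_normal => r /= Hr.
  rewrite cpE (monicP (monic_prod_XsubC _ _ _)) scale1r in Hr.
  have pr : perm_eq r [seq e 0 i ^+ 2 | i <- enum 'I_n].
    apply: prod_XsubC_eq; rewrite -Hr big_map enumT.
    done.
  rewrite (perm_big _ pr) big_map enumT; apply: eq_bigr => i _.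
  by rewrite -real_normK ?ereal // sqrCK.
rewrite tnE trE; split => //.
by apply: sumr_ge0 => i _.
Qed.
Lemma mxvec_index_inj m n (i i' : 'I_m) (j j' : 'I_n) :
  mxvec_index i j = mxvec_index i' j' -> i = i' /\ j = j'.
Proof.
move=> /(congr1 (fun k => enum_val (cast_ord (esym (mxvec_cast m n)) k))).
by rewrite !cast_ordK !enum_rankK => -[-> ->].
Qed.

Definition unvec m n (k : 'I_(m * n)) : 'I_m * 'I_n :=
  enum_val (cast_ord (esym (mxvec_cast m n)) k).
Arguments unvec {m n} k.

Lemma unvecK m n (i : 'I_m) (j : 'I_n) : unvec (mxvec_index i j) = (i, j).
Proof. by rewrite /unvec /mxvec_index cast_ordK enum_rankK. Qed.

Lemma kronE' m1 n1 m2 n2 (A : 'M[algC]_(m1, n1)) (B : 'M[algC]_(m2, n2)) k l :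
  kron A B k l = A (unvec k).1 (unvec l).1 * B (unvec k).2 (unvec l).2.
Proof.
by rewrite /kron mxE; case: (mxvec_indexP k) => i1 i2; case: (mxvec_indexP l) => j1 j2;
  rewrite !unvecK.
Qed.

Lemma kronE m1 n1 m2 n2 (A : 'M[algC]_(m1, n1)) (B : 'M[algC]_(m2, n2)) i1 i2 j1 j2 :
  kron A B (mxvec_index i1 i2) (mxvec_index j1 j2) = A i1 j1 * B i2 j2.
Proof. by rewrite kronE' !unvecK. Qed.

Lemma sum_mxvec m n (F : 'I_(m * n) -> algC) :
  \sum_k F k = \sum_i \sum_j F (mxvec_index i j).
Proof.
rewrite pair_big /=.
rewrite (reindex (fun p : 'I_m * 'I_n => mxvec_index p.1 p.2)) //=.
case: (curry_mxvec_bij m n) => g h1 h2.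
by exists g => [[i j] _|k _]; [exact: (h1 (i, j)) | rewrite /= -[RHS](h2 k) //; case: (g k)].
Qed.

Lemma kron_mul m1 n1 p1 m2 n2 p2 (A : 'M[algC]_(m1, n1)) (B : 'M[algC]_(m2, n2))
  (C : 'M[algC]_(n1, p1)) (D : 'M[algC]_(n2, p2)) :
  kron A B *m kron C D = kron (A *m C) (B *m D).
Proof.
apply/matrixP => k l; case/mxvec_indexP: k => i1 i2; case/mxvec_indexP: l => j1 j2.
rewrite kronE !mxE sum_mxvec big_distrl; apply: eq_bigr => a _.
rewrite big_distrr; apply: eq_bigr => b _ /=.
by rewrite !kronE' !unvecK /= mulrACA.
Qed.

Lemma adj_kron m1 n1 m2 n2 (A : 'M[algC]_(m1, n1)) (B : 'M[algC]_(m2, n2)) :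
  adj (kron A B) = kron (adj A) (adj B).
Proof.
apply/matrixP => k l; case/mxvec_indexP: k => i1 i2; case/mxvec_indexP: l => j1 j2.
by rewrite kronE /adj mxE [map_mx _ _ _ _]mxE kronE' !unvecK /= !mxE rmorphM.
Qed.

Lemma kronDr m1 n1 m2 n2 (A : 'M[algC]_(m1, n1)) (B C : 'M[algC]_(m2, n2)) :
  kron A (B + C) = kron A B + kron A C.
Proof.
apply/matrixP => k l; case/mxvec_indexP: k => i1 i2; case/mxvec_indexP: l => j1 j2.
by rewrite [RHS]mxE !kronE !mxE mulrDr.
Qed.

Lemma kronZr m1 n1 m2 n2 (A : 'M[algC]_(m1, n1)) (a : algC) (B : 'M[algC]_(m2, n2)) :
  kron A (a *: B) = a *: kron A B.
Proof.
apply/matrixP => k l; case/mxvec_indexP: k => i1 i2; case/mxvec_indexP: l => j1 j2.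
by rewrite [RHS]mxE !kronE !mxE mulrCA.
Qed.

Lemma kronDl m1 n1 m2 n2 (A C : 'M[algC]_(m1, n1)) (B : 'M[algC]_(m2, n2)) :
  kron (A + C) B = kron A B + kron C B.
Proof.
apply/matrixP => k l; case/mxvec_indexP: k => i1 i2; case/mxvec_indexP: l => j1 j2.
by rewrite [RHS]mxE !kronE !mxE mulrDl.
Qed.

Lemma kron0r m1 n1 m2 n2 (A : 'M[algC]_(m1, n1)) :
  kron A (0 : 'M[algC]_(m2, n2)) = 0.
Proof.
apply/matrixP => k l; case/mxvec_indexP: k => i1 i2; case/mxvec_indexP: l => j1 j2.
by rewrite [RHS]mxE !kronE !mxE mulr0.
Qed.

Lemma kron_sumr m1 n1 m2 n2 (I : Type) (r : seq I) (P : pred I) (A : 'M[algC]_(m1, n1))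
  (F : I -> 'M[algC]_(m2, n2)) :
  kron A (\sum_(i <- r | P i) F i) = \sum_(i <- r | P i) kron A (F i).
Proof. by elim/big_rec2: _ => [|i x y _ <-]; rewrite ?kron0r ?kronDr. Qed.
Lemma ptr_kron d (A B : 'M[algC]_2) (C : 'M[algC]_d) :
  ptrA1A2 (kron A (kron B C)) = (\tr A * \tr B) *: C.
Proof.
apply/matrixP => i j; rewrite /ptrA1A2 mxE [RHS]mxE.
rewrite /mxtrace mulr_suml mulr_suml; apply: eq_bigr => a _.
rewrite mulr_sumr mulr_suml; apply: eq_bigr => b _.
by rewrite !kronE mulrA.
Qed.

Lemma ptrD d (M N : 'M[algC]_(2 * (2 * d))) : ptrA1A2 (M + N) = ptrA1A2 M + ptrA1A2 N.
Proof.
apply/matrixP => i j; rewrite /ptrA1A2 !mxE -big_split; apply: eq_bigr => a _.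
by rewrite -big_split; apply: eq_bigr => b _; rewrite mxE.
Qed.

Lemma ptrZ d (x : algC) (M : 'M[algC]_(2 * (2 * d))) : ptrA1A2 (x *: M) = x *: ptrA1A2 M.
Proof.
apply/matrixP => i j; rewrite /ptrA1A2 !mxE mulr_sumr; apply: eq_bigr => a _.
by rewrite mulr_sumr; apply: eq_bigr => b _; rewrite mxE.
Qed.

Lemma rhoZED d (M N : 'M[algC]_(2 * (2 * d))) : rhoZE (M + N) = rhoZE M + rhoZE N.
Proof.
by rewrite /rhoZE -big_split; apply: eq_bigr => a _; rewrite mulmxDr ptrD kronDr.
Qed.

Lemma rhoZEZ d (x : algC) (M : 'M[algC]_(2 * (2 * d))) : rhoZE (x *: M) = x *: rhoZE M.
Proof.
by rewrite /rhoZE scaler_sumr; apply: eq_bigr => a _; rewrite -scalemxAr ptrZ kronZr.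
Qed.

Lemma rhoZE0 d : rhoZE (0 : 'M[algC]_(2 * (2 * d))) = 0.
Proof. by rewrite -(scale0r 0) rhoZEZ scale0r. Qed.

Lemma rhoZEN d (M : 'M[algC]_(2 * (2 * d))) : rhoZE (- M) = - rhoZE M.
Proof. by rewrite -scaleN1r rhoZEZ scaleN1r. Qed.

Lemma rhoZEB d (M N : 'M[algC]_(2 * (2 * d))) : rhoZE (M - N) = rhoZE M - rhoZE N.
Proof. by rewrite rhoZED rhoZEN. Qed.

Lemma rhoZE_sum d (I : Type) (r : seq I) (P : pred I) (F : I -> 'M[algC]_(2 * (2 * d))) :
  rhoZE (\sum_(i <- r | P i) F i) = \sum_(i <- r | P i) rhoZE (F i).
Proof. by elim/big_rec2: _ => [|i x y _ <-]; rewrite ?rhoZE0 ?rhoZED. Qed.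

Lemma ket_adj (a b : 'I_2) : ket a *m adj (ket b) = delta_mx a b.
Proof.
apply/matrixP => i j; rewrite !mxE big_ord1 !mxE.
rewrite !andbT rmorph_nat -natrM; by case: (i == a); case: (j == b).
Qed.

Lemma tr_delta (a b : 'I_2) : \tr (delta_mx a b : 'M[algC]_2) = (a == b)%:R.
Proof.
rewrite /mxtrace (bigD1 a) //= big1 => [|i ni]; last by rewrite mxE (negPf ni).
by rewrite mxE eqxx addr0 /= eq_sym.
Qed.
Lemma rhoZE_kron d (a a' b b' : 'I_2) (C : 'M[algC]_d) :
  rhoZE (kron (delta_mx a a') (kron (delta_mx b b') C)) =
  ((a == a')%:R * (b == b')%:R) *: kron (delta_mx a a) C.
Proof.
rewrite /rhoZE (bigD1 a) //= big1 => [|x nx].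
  rewrite addr0 ket_adj kron_mul mul1mx ptr_kron mul_delta_mx tr_delta tr_delta.
  by rewrite kronZr.
rewrite ket_adj kron_mul mul1mx ptr_kron mul_delta_mx_cond tr_delta.
by rewrite (negPf nx) mulr0n mxtrace0 mul0r scale0r kron0r.
Qed.
Definition kv d (a b : 'I_2) (u : 'cV[algC]_d) := kron (ket a) (kron (ket b) u).
Arguments kv {d} a b u.

Lemma kv_outer d (a b a' b' : 'I_2) (u v : 'cV[algC]_d) :
  kv a b u *m adj (kv a' b' v) = kron (delta_mx a a') (kron (delta_mx b b') (u *m adj v)).
Proof. by rewrite /kv !adj_kron !kron_mul !ket_adj. Qed.

Lemma adj0 m n : adj (0 : 'M[algC]_(m, n)) = 0.
Proof. by apply/matrixP => i j; rewrite !mxE rmorph0. Qed.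

Lemma adj_sum m n (I : Type) (r : seq I) (P : pred I) (F : I -> 'M[algC]_(m, n)) :
  adj (\sum_(i <- r | P i) F i) = \sum_(i <- r | P i) adj (F i).
Proof. by elim/big_rec2: _ => [|i x y _ <-]; rewrite ?adj0 ?adjD. Qed.

Lemma rhoZE_outer d (c g : 'I_2 -> 'I_2 -> 'cV[algC]_d) :
  rhoZE ((\sum_a \sum_b kv a b (c a b)) *m adj (\sum_a \sum_b kv a b (g a b))) =
  \sum_a \sum_b kron (delta_mx a a) (c a b *m adj (g a b)).
Proof.
rewrite adj_sum mulmx_suml rhoZE_sum; apply: eq_bigr => a _.
rewrite mulmx_suml rhoZE_sum; apply: eq_bigr => b _.
rewrite mulmx_sumr rhoZE_sum (bigD1 a) //= [X in _ + X]big1 => [|a' na].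
  rewrite addr0 adj_sum mulmx_sumr rhoZE_sum (bigD1 b) //= [X in _ + X]big1 => [|b' nb].
    by rewrite addr0 kv_outer rhoZE_kron !eqxx mulr1 scale1r.
  rewrite kv_outer rhoZE_kron.
  have -> : (b == b') = false by rewrite eq_sym (negPf nb).
  by rewrite mulr0 scale0r.
rewrite adj_sum mulmx_sumr rhoZE_sum big1 // => b' _.
rewrite kv_outer rhoZE_kron.
have -> : (a == a') = false by rewrite eq_sym (negPf na).
by rewrite mul0r scale0r.
Qed.
Lemma inner_dot n (q r : 'cV[algC]_n) : inner q r = dotmx (r^T) (q^T).
Proof.
rewrite /inner dotmxE !mxE; apply: eq_bigr => k _; rewrite !mxE mulrC.
done.
Qed.

Lemma sqnorm_ge0 n (q : 'cV[algC]_n) : 0 <= sqnorm q.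
Proof. by rewrite /sqnorm inner_dot dnorm_ge0. Qed.

Lemma CS n (q r : 'cV[algC]_n) : `|inner q r| <= sqrtC (sqnorm q) * sqrtC (sqnorm r).
Proof.
rewrite /sqnorm !inner_dot mulrC.
exact: (CauchySchwarz_sqrt (@dotmx _ n) (r^T) (q^T)).1.
Qed.
Lemma term_bound n (Z : 'M[algC]_n) (p q : 'cV[algC]_n) : adj Z *m Z = 1%:M ->
  `|\tr (Z *m (p *m adj q))| <= sqrtC (sqnorm p) * sqrtC (sqnorm q).
Proof.
move=> hZ.
have -> : \tr (Z *m (p *m adj q)) = inner q (Z *m p).
  by rewrite mulmxA mxtrace_mulC trace_mx11.
have -> : sqnorm p = sqnorm (Z *m p).
  by rewrite /sqnorm /inner adjM -mulmxA (mulmxA (adj Z)) hZ mul1mx.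
by rewrite mulrC; apply: CS.
Qed.

Lemma kron11 (A B : 'M[algC]_1) : kron A B 0 0 = A 0 0 * B 0 0.
Proof.
by rewrite kronE'; case: unvec => i j; rewrite /= !ord1.
Qed.

Lemma ket_adj1 (a : 'I_2) : adj (ket a) *m ket a = 1%:M.
Proof.
apply/matrixP => i j; rewrite !ord1 !mxE (bigD1 a) //= big1 => [|k nk].
  by rewrite !mxE !eqxx /= rmorph1 mulr1 addr0.
by rewrite !mxE (negPf nk) /= rmorph0 mul0r.
Qed.

Lemma sqnormE n (x : 'cV[algC]_n) : sqnorm x = \sum_k (x k 0)^* * x k 0.
Proof. by rewrite /sqnorm /inner mxE; apply: eq_bigr => k _; rewrite !mxE. Qed.

Lemma kron_ket_entry d (a i : 'I_2) (j : 'I_d) (u : 'cV[algC]_d) (z : 'I_1) :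
  kron (ket a) u (mxvec_index i j) z = (i == a)%:R * u j 0.
Proof.
rewrite kronE' unvecK /=; case: unvec => x y /=; rewrite !ord1 !mxE /=.
by rewrite andbT.
Qed.

Lemma sqnorm_kv1 d (a : 'I_2) (u : 'cV[algC]_d) : sqnorm (kron (ket a) u) = sqnorm u.
Proof.
rewrite !sqnormE sum_mxvec (bigD1 a) //= [X in _ + X]big1 => [|i ni].
  by rewrite addr0; apply: eq_bigr => j _; rewrite !kron_ket_entry eqxx mul1r.
by rewrite big1 // => j _; rewrite !kron_ket_entry (negPf ni) mul0r mulr0.
Qed.

Lemma sqnormZ n (x : algC) (u : 'cV[algC]_n) : sqnorm (x *: u) = x^* * x * sqnorm u.
Proof.
rewrite !sqnormE mulr_sumr; apply: eq_bigr => k _; rewrite !mxE rmorphM.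
by rewrite mulrACA.
Qed.

Lemma kron_delta_outer d (a : 'I_2) (u v : 'cV[algC]_d) :
  kron (delta_mx a a) (u *m adj v) = kron (ket a) u *m adj (kron (ket a) v).
Proof. by rewrite adj_kron kron_mul ket_adj. Qed.
Lemma term_bound_kv d (Z : 'M[algC]_(2 * d)) (a : 'I_2) (u v : 'cV[algC]_d) :
  adj Z *m Z = 1%:M ->
  `|\tr (Z *m kron (delta_mx a a) (u *m adj v))| <= sqrtC (sqnorm u) * sqrtC (sqnorm v).
Proof.
move=> hZ; rewrite kron_delta_outer -(sqnorm_kv1 _ a u) -(sqnorm_kv1 _ a v).
exact: term_bound.
Qed.
Lemma sum2 (T : nmodType) (F : 'I_2 -> T) : \sum_(i < 2) F i = F ord0 + F ord_max.
Proof.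
rewrite big_ord_recl big_ord1; congr (_ + F _); exact: val_inj.
Qed.

Lemma ord2_cases (i : 'I_2) : i = ord0 \/ i = ord_max.
Proof. by case: i => [[|[|//]] ?]; [left|right]; apply: val_inj. Qed.

Lemma sq_conj (x : algC) : 0 <= x -> (sqrtC x)^* * sqrtC x = x.
Proof.
move=> hx; have r : sqrtC x \is Num.real by rewrite ger0_real // sqrtC_ge0.
by rewrite (CrealP r) -expr2 sqrtCK.
Qed.

Lemma sqrt_prod (x y t : algC) : 0 <= x -> 0 <= y -> 0 <= t -> x * y = t ^+ 2 ->
  sqrtC x * sqrtC y = t.
Proof.
move=> hx hy ht hxy; rewrite -sqrtCM ?nnegrE // hxy sqrCK //.
Qed.
Lemma polar1 m n (x y : 'M[algC]_(m, n)) :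
  (x + y) *m adj (x + y) + (x - y) *m adj (x - y) = 2%:R *: (x *m adj x + y *m adj y).
Proof.
rewrite adjD adjB mulmxBl mulmxDl !mulmxBr !mulmxDr.
move: (x *m adj x) (x *m adj y) (y *m adj x) (y *m adj y) => A B C D.
by apply/matrixP => i j; rewrite !mxE; ring.
Qed.

Lemma polar2 m n (x y : 'M[algC]_(m, n)) :
  (x + y) *m adj (x + y) - (x - y) *m adj (x - y) = 2%:R *: (x *m adj y + y *m adj x).
Proof.
rewrite adjD adjB mulmxBl mulmxDl !mulmxBr !mulmxDr.
move: (x *m adj x) (x *m adj y) (y *m adj x) (y *m adj y) => A B C D.
by apply/matrixP => i j; rewrite !mxE; ring.
Qed.
Lemma adj_delta (a : 'I_2) : adj (delta_mx a a : 'M[algC]_2) = delta_mx a a.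
Proof.
apply/matrixP => i j; rewrite !mxE; case: (i == a); case: (j == a);
  by rewrite /= ?rmorph0 ?rmorph1.
Qed.

Lemma adj_kdo d (a : 'I_2) (u v : 'cV[algC]_d) :
  adj (kron (delta_mx a a) (u *m adj v)) = kron (delta_mx a a) (v *m adj u).
Proof. by rewrite adj_kron adjM adjK adj_delta. Qed.
Lemma bnd4 (F : 'I_2 -> 'I_2 -> algC) (T : algC) :
  (forall a b, `|F a b| <= T) -> `|\sum_a \sum_b F a b| <= T + T + (T + T).
Proof.
move=> h; apply: (le_trans (ler_norm_sum _ _ _)); rewrite sum2.
by apply: lerD; apply: (le_trans (ler_norm_sum _ _ _)); rewrite sum2; apply: lerD.
Qed.
Lemma fin_ineq (t Q : algC) : t <= 8%:R * (Q * (1 - Q)) -> 2^-1 * t <= 4 * Q * (1 - Q).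
Proof.
move=> h; apply: (le_trans (ler_wpM2l _ h)); first by rewrite invr_ge0 ler0n.
rewrite le_eqVlt; apply/orP; left; apply/eqP.
by field.
Qed.
Theorem mainTheorem6
  (d : nat) (k0E k1E : 'cV[algC]_d)
  (horth : [/\ sqnorm k0E = 1, sqnorm k1E = 1 & inner k0E k1E = 0])
  (eta Q : algC) (heta : `|eta| <= 1) (hQ0 : 0 <= Q) (hQ1 : Q <= 1)
  (Rw : 'M[algC]_(2 * (2 * d), 2 * 2))
  (V : 'M[algC]_(2 * d))
  (e0 e1 e2 e3 f0 f1 f2 f3 : 'cV[algC]_d) :
  let ke := eta *: k0E + sqrtC (1 - `|eta| ^+ 2) *: k1E in
  let kf := - (Num.conj eta) *: k0E + sqrtC (1 - `|eta| ^+ 2) *: k1E in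
  Rw *m kron ket0 ket0 =
    sqrtC (1 - Q) *: kron ket0 (kron ket0 k0E) + sqrtC Q *: kron ket1 (kron ket0 kf) ->
  Rw *m kron ket1 ket1 =
    sqrtC Q *: kron ket0 (kron ket1 ke) + sqrtC (1 - Q) *: kron ket1 (kron ket1 k0E) ->
  adj V *m V = 1%:M ->
  V *m kron ket0 k0E = kron ket0 e0 + kron ket1 e1 ->
  V *m kron ket1 k0E = kron ket0 e2 + kron ket1 e3 ->
  V *m kron ket0 kf = kron ket0 f0 + kron ket1 f1 ->
  V *m kron ket1 ke = kron ket0 f2 + kron ket1 f3 ->
  [/\ sqnorm e0 = 1 - Q, sqnorm e3 = 1 - Q, sqnorm f0 = 1 - Q & sqnorm f3 = 1 - Q] ->
  [/\ sqnorm e1 = Q, sqnorm e2 = Q, sqnorm f1 = Q & sqnorm f2 = Q] ->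
  let W := kron (1%:M : 'M[algC]_2) V *m Rw in
  let phip := (sqrtC 2)^-1 *: (kron ket0 ket0 + kron ket1 ket1) in
  let phim := (sqrtC 2)^-1 *: (kron ket0 ket0 - kron ket1 ket1) in
  let tau := W *m (phip *m adj phip) *m adj W in
  let mu := W *m (phim *m adj phim) *m adj W in
  let sigma := 2^-1 *: (W *m (kron ket0 ket0 *m adj (kron ket0 ket0)
                               + kron ket1 ket1 *m adj (kron ket1 ket1)) *m adj W) in
  rhoZE sigma = 2^-1 *: rhoZE tau + 2^-1 *: rhoZE mu /\
  2^-1 * tnorm (rhoZE tau - rhoZE mu) <= 4 * Q * (1 - Q).
Proof.
move=> ke kf HR0 HR1 HV HVe0 HVe1 HVf HVe Hn1 Hn2 W phip phim tau mu sigma.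
set s' := sqrtC (1 - Q); set s := sqrtC Q.
pose c (a b : 'I_2) := if a == ord0 then (if b == ord0 then s' *: e0 else s' *: e1)
                       else (if b == ord0 then s *: f0 else s *: f1).
pose g (a b : 'I_2) := if a == ord0 then (if b == ord0 then s *: f2 else s *: f3)
                       else (if b == ord0 then s' *: e2 else s' *: e3).
have Hw0 : W *m kron ket0 ket0 = \sum_a \sum_b kv a b (c a b).
  rewrite /W -mulmxA HR0 mulmxDr -!scalemxAr !kron_mul !mul1mx HVe0 HVf.
  rewrite !sum2 /c /g /= /kv !kronDr !kronZr.
  by rewrite !scalerDr.
have Hw1 : W *m kron ket1 ket1 = \sum_a \sum_b kv a b (g a b).
  rewrite /W -mulmxA HR1 mulmxDr -!scalemxAr !kron_mul !mul1mx HVe HVe1.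
  rewrite !sum2 /c /g /= /kv !kronDr !kronZr.
  by rewrite !scalerDr.
have hcs : (sqrtC 2)^-1 * ((sqrtC 2)^-1)^* = 2^-1 :> algC.
  have r : ((sqrtC 2)^-1 : algC) \is Num.real by apply: ger0_real; rewrite invr_ge0 sqrtC_ge0 ler0n.
  by rewrite (CrealP r) -invfM -expr2 sqrtCK.
have Ephi : forall x : 'M[algC]_(2 * 2, 1 * 1),
    ((sqrtC 2)^-1 *: x) *m adj ((sqrtC 2)^-1 *: x) = 2^-1 *: (x *m adj x).
  by move=> x; rewrite adjZ -scalemxAl -scalemxAr scalerA hcs.
have h2 : (2^-1 : algC) * 2%:R = 1 by rewrite mulVf // pnatr_eq0.
have Hsig : sigma = 2^-1 *: tau + 2^-1 *: mu.
  rewrite /sigma -scalerDr /tau /mu -mulmxDl -mulmxDr /phip /phim !Ephi -scalerDr.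
  by rewrite polar1 scalerA h2 scale1r.
split; first by rewrite Hsig rhoZED !rhoZEZ.
have adjWE : forall x y : 'M[algC]_(2 * 2, 1 * 1),
    W *m (x *m adj y) *m adj W = (W *m x) *m adj (W *m y).
  by move=> x y; rewrite adjM !mulmxA.
have HX : rhoZE tau - rhoZE mu =
    \sum_a \sum_b kron (delta_mx a a) (c a b *m adj (g a b)) +
    \sum_a \sum_b kron (delta_mx a a) (g a b *m adj (c a b)).
  rewrite -rhoZEB /tau /mu -mulmxBl -mulmxBr /phip /phim !Ephi -scalerBr.
  rewrite polar2 scalerA h2 scale1r mulmxDr mulmxDl rhoZED !adjWE Hw0 Hw1.
  by rewrite !rhoZE_outer.
rewrite HX.
set X := _ + _.
have hH : adj X = X.
  rewrite /X adjD !adj_sum addrC; congr (_ + _); apply: eq_bigr => a _;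
  by rewrite adj_sum; apply: eq_bigr => b _; rewrite adj_kdo.
have [Z [hZ [htr hge]]] := tnorm_herm _ X hH.
move: Hn1 Hn2 => [n_e0 n_e3 n_f0 n_f3] [n_e1 n_e2 n_f1 n_f2].
have hT0 : 0 <= Q * (1 - Q) by rewrite mulr_ge0 // subr_ge0.
have hT : forall a b, sqrtC (sqnorm (c a b)) * sqrtC (sqnorm (g a b)) = Q * (1 - Q).
  move=> a b; apply: sqrt_prod; rewrite ?sqnorm_ge0 //.
  have hQ' : 0 <= 1 - Q by rewrite subr_ge0.
  rewrite /c /g; case: (ord2_cases a) => ->; case: (ord2_cases b) => -> /=;
  rewrite !sqnormZ !sq_conj // ?n_e0 ?n_e1 ?n_e2 ?n_e3 ?n_f0 ?n_f1 ?n_f2 ?n_f3; ring.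
have bnd : tnorm X <= 8%:R * (Q * (1 - Q)).
  rewrite -(ger0_norm hge) htr mulmxDr.
  rewrite mxtraceD !mulmx_sumr !raddf_sum /=.
  apply: (le_trans (ler_normD _ _)).
  have -> : 8%:R * (Q * (1 - Q)) = (Q * (1 - Q) + Q * (1 - Q) + (Q * (1 - Q) + Q * (1 - Q)))
      + (Q * (1 - Q) + Q * (1 - Q) + (Q * (1 - Q) + Q * (1 - Q))) by ring.
  apply: lerD; (under eq_bigr => i _ do rewrite mulmx_sumr raddf_sum); apply: bnd4 => a b.
    by apply: (le_trans (term_bound_kv _ _ _ _ _ hZ)); rewrite hT.
  by apply: (le_trans (term_bound_kv _ _ _ _ _ hZ)); rewrite mulrC hT.
exact: fin_ineq.
Qed.
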